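(* There is $\varepsilon_0>0$ such that for every $\varepsilon$ with $0<\varepsilon<\varepsilon_0$, every even $m\geq 2$ and every odd $l\geq 1$, Challenger has a winning strategy in the game $\Gamma_{\mathrm{OP}}(\mathbb M_l,\mathbb M_m,6,\varepsilon)$.
   Context: $\mathbb M_m$ denotes the algebra of complex $m\times m$ matrices with matrix multiplication, addition, scalar multiplication and adjoint $a^*$ (conjugate transpose); $1_m$ is the identity matrix. For a vector $\xi=(x_1,\dots,x_m)\in\mathbb C^m$, $\|\xi\|=\sqrt{\sum_i|x_i|^2}$, and the operator norm of $a\in\mathbb M_m$ is $\|a\|_{\mathrm{OP}}=\sup\{\|a\xi\|:\|\xi\|=1\}$. For $l,m,n\geq 1$ and $\varepsilon>0$, the game $\Gamma_{\mathrm{OP}}(\mathbb M_l,\mathbb M_m,n,\varepsilon)$ between Challenger and Duplicator lasts $n$ innings: in each inning Challenger chooses a matrix $x$ with $\|x\|_{\mathrm{OP}}\leq 1$ in one of $\mathbb M_l$, $\mathbb M_m$, and Duplicator responds with a matrix $x$ with $\|x\|_{\mathrm{OP}}\leq 1$ in the other algebra; thus in inning $j$ matrices $a_j\in\mathbb M_l$ and $b_j\in\mathbb M_m$ are determined (repetitions are allowed). After $n$ innings Duplicator wins iff for all $i,j,k\leq n$ and all complex numbers $y,z$ with $\max(|y|,|z|)\leq 1$, each of the quantities $\big|\|a_i\|_{\mathrm{OP}}-\|b_i\|_{\mathrm{OP}}\big|$, $\big|\|a_ia_j-a_k\|_{\mathrm{OP}}-\|b_ib_j-b_k\|_{\mathrm{OP}}\big|$,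 $\big|\|ya_i+za_j-a_k\|_{\mathrm{OP}}-\|yb_i+zb_j-b_k\|_{\mathrm{OP}}\big|$ and $\big|\|a_i^*-a_j\|_{\mathrm{OP}}-\|b_i^*-b_j\|_{\mathrm{OP}}\big|$ is at most $\varepsilon$; otherwise Challenger wins. A winning strategy for a player is a rule specifying that player's moves as a function of previous moves such that the player wins regardless of the opponent's play. *)

(* Defs.v *)
From HB Require Import structures.
From mathcomp Require Import all_boot all_order all_algebra.
From mathcomp Require Import classical_sets reals Rstruct.
From mathcomp.real_closed Require Import complex.
Set Implicit Arguments. Unset Strict Implicit. Unset Printing Implicit Defensive.
Import Order.TTheory GRing.Theory Num.Theory.
Local Open Scope ring_scope.

Notation RR := Rdefinitions.R.
Notation CC := (RR[i]).

Definition vnorm (m : nat) (xi : 'cV[CC]_m) : RR :=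
  Num.sqrt (\sum_(i < m) (complex.Re (xi i 0) ^+ 2 + complex.Im (xi i 0) ^+ 2)).

Definition opnorm (m : nat) (a : 'M[CC]_m) : RR :=
  sup [set r : RR | exists xi : 'cV[CC]_m, vnorm xi = 1 /\ r = vnorm (a *m xi)].

Definition adj (m : nat) (a : 'M[CC]_m) : 'M[CC]_m :=
  \matrix_(i, j) conjc (a j i).

Definition cmove (l m : nat) : Type := ('M[CC]_l + 'M[CC]_m)%type.

Definition history (l m : nat) : Type := seq ('M[CC]_l * 'M[CC]_m).

Definition cstrat (l m : nat) : Type := history l m -> cmove l m.

Record dstrat (l m : nat) : Type := DStrat {
  dreplyL : history l m -> 'M[CC]_l -> 'M[CC]_m;
  dreplyR : history l m -> 'M[CC]_m -> 'M[CC]_l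
}.

Definition cstrat_legal (l m : nat) (s : cstrat l m) : Prop :=
  forall h, match s h with
            | inl a => opnorm a <= 1
            | inr b => opnorm b <= 1
            end.

Definition dstrat_legal (l m : nat) (t : dstrat l m) : Prop :=
  (forall h a, opnorm a <= 1 -> opnorm (dreplyL t h a) <= 1) /\
  (forall h b, opnorm b <= 1 -> opnorm (dreplyR t h b) <= 1).

Definition inning (l m : nat) (s : cstrat l m) (t : dstrat l m)
    (h : history l m) : 'M[CC]_l * 'M[CC]_m :=
  match s h with
  | inl a => (a, dreplyL t h a)
  | inr b => (dreplyR t h b, b)
  end.

Fixpoint play (l m : nat) (s : cstrat l m) (t : dstrat l m) (n : nat)
    : history l m :=
  match n with
  | 0 => [::]
  | n'.+1 => let h := play s t n' in rcons h (inning s t h)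
  end.

Definition dup_wins (l m : nat) (n : nat) (eps : RR) (p : history l m) : Prop :=
  let a := fun j => (nth (0, 0) p j).1 in
  let b := fun j => (nth (0, 0) p j).2 in
  forall i j k : nat, (i < n)%N -> (j < n)%N -> (k < n)%N ->
  forall y z : CC, `|y| <= 1 -> `|z| <= 1 ->
    [/\ `| opnorm (a i) - opnorm (b i) | <= eps,
        `| opnorm (a i *m a j - a k) - opnorm (b i *m b j - b k) | <= eps,
        `| opnorm (y *: a i + z *: a j - a k)
           - opnorm (y *: b i + z *: b j - b k) | <= eps
      & `| opnorm (adj (a i) - a j) - opnorm (adj (b i) - b j) | <= eps].

Definition challenger_wins (l m n : nat) (eps : RR) : Prop :=
  exists s : cstrat l m, cstrat_legal s /\
    forall t : dstrat l m, dstrat_legal t -> ~ dup_wins n eps (play s t n).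

(* Main.v *)
Require Import Defs.
From HB Require Import structures.
From mathcomp Require Import all_boot all_order all_algebra.
From mathcomp Require Import classical_sets reals Rstruct.
From mathcomp.real_closed Require Import complex.
From mathcomp Require Import ring lra sesquilinear spectral.
Import Order.TTheory GRing.Theory Num.Theory.
Local Open Scope ring_scope.
Set Implicit Arguments. Unset Strict Implicit. Unset Printing Implicit Defensive.

Definition cn (z : CC) : RR := complex.Re z ^+ 2 + complex.Im z ^+ 2.

Lemma cn_ge0 z : 0 <= cn z.
Proof. by rewrite /cn addr_ge0 // sqr_ge0. Qed.

Lemma cnM x y : cn (x * y) = cn x * cn y.
Proof. case: x => a b; case: y => c d; rewrite /cn /=. ring. Qed.

Lemma cnR (r : RR) : cn (r%:C)%C = r ^+ 2.
Proof. rewrite /cn /=. ring. Qed.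

Lemma cnD_Re z : complex.Re z ^+ 2 <= cn z.
Proof. rewrite /cn lerDl sqr_ge0 //. Qed.

Lemma vnormE n (xi : 'cV[CC]_n) : vnorm xi = Num.sqrt (\sum_i cn (xi i 0)).
Proof. by []. Qed.

Lemma vnorm_ge0 n (xi : 'cV[CC]_n) : 0 <= vnorm xi.
Proof. exact: sqrtr_ge0. Qed.

Lemma vnormZ n (c : CC) (xi : 'cV[CC]_n) :
  vnorm (c *: xi) = Num.sqrt (cn c) * vnorm xi.
Proof.
rewrite !vnormE -sqrtrM ?cn_ge0 // mulr_sumr; congr Num.sqrt.
by apply: eq_bigr => i _; rewrite mxE cnM.
Qed.

Lemma vnormZr n (r : RR) (xi : 'cV[CC]_n) :
  vnorm ((r%:C)%C *: xi) = `|r| * vnorm xi.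
Proof. by rewrite vnormZ cnR sqrtr_sqr. Qed.

Lemma vnormN n (xi : 'cV[CC]_n) : vnorm (- xi) = vnorm xi.
Proof.
have -> : - xi = ((-1 : RR)%:C)%C *: xi.
  by apply/matrixP => i j; rewrite !mxE; case: (xi i j) => a b; simpc.
by rewrite vnormZr normrN1 mul1r.
Qed.

Lemma vnorm0 n : vnorm (0 : 'cV[CC]_n) = 0.
Proof.
rewrite vnormE big1 ?sqrtr0 // => i _; rewrite mxE /cn /=; ring.
Qed.

Lemma vnorm_eq0 n (xi : 'cV[CC]_n) : vnorm xi = 0 -> xi = 0.
Proof.
rewrite vnormE => /eqP; rewrite sqrtr_eq0 => H.
have H0 : \sum_i cn (xi i 0) = 0.
  by apply/eqP; rewrite eq_le H sumr_ge0 // => i _; exact: cn_ge0.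
move/psumr_eq0P: H0 => H1.
apply/matrixP => i j; rewrite (ord1 j) mxE.
have := H1 (fun i _ => cn_ge0 _) i isT => /eqP.
case: (xi i 0) => a b; rewrite /cn /= => H2. have: a ^+ 2 + b ^+ 2 == 0 by rewrite H2.
rewrite paddr_eq0 ?sqr_ge0 // !sqrf_eq0 => /andP[/eqP -> /eqP ->] //.
Qed.
Definition pr (x y : CC) : RR := complex.Re x * complex.Re y + complex.Im x * complex.Im y.

Lemma cnD x y : cn (x + y) = cn x + cn y + 2 * pr x y.
Proof. case: x => a b; case: y => c d; rewrite /cn /pr /=. ring. Qed.

Lemma pr_le (t : RR) x y : 0 < t -> 2 * pr x y <= t * cn x + t^-1 * cn y.
Proof.
move=> t0; set s := t^-1.
have st : s * t = 1 by rewrite /s mulVf // gt_eqF.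
have E : t * cn x + s * cn y - 2 * pr x y =
  s * ((t * complex.Re x - complex.Re y) ^+ 2 + (t * complex.Im x - complex.Im y) ^+ 2)
  + (1 - s * t) * (t * cn x - 2 * pr x y).
  rewrite /cn /pr; ring.
rewrite st subrr mul0r addr0 in E.
rewrite -subr_ge0 E mulr_ge0 // ?addr_ge0 ?sqr_ge0 // /s invr_ge0 ltW //.
Qed.

Lemma vnormD n (xi zeta : 'cV[CC]_n) : vnorm (xi + zeta) <= vnorm xi + vnorm zeta.
Proof.
have [a0|a0] := eqVneq (vnorm xi) 0.
  by rewrite (vnorm_eq0 a0) add0r vnorm0 add0r.
have [b0|b0] := eqVneq (vnorm zeta) 0.
  by rewrite (vnorm_eq0 b0) addr0 vnorm0 addr0.
set a := vnorm xi; set b := vnorm zeta.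
have ap : 0 < a by rewrite lt0r a0 vnorm_ge0.
have bp : 0 < b by rewrite lt0r b0 vnorm_ge0.
set t := b / a.
have tp : 0 < t by rewrite divr_gt0.
have Ha : \sum_i cn (xi i 0) = a ^+ 2 by rewrite /a vnormE sqr_sqrtr // sumr_ge0 // => i _; exact: cn_ge0.
have Hb : \sum_i cn (zeta i 0) = b ^+ 2 by rewrite /b vnormE sqr_sqrtr // sumr_ge0 // => i _; exact: cn_ge0.
have -> : a + b = Num.sqrt ((a + b) ^+ 2) by rewrite sqrtr_sqr ger0_norm // addr_ge0 // ltW.
rewrite vnormE.
rewrite ler_sqrt ?sqr_ge0 //.
have -> : \sum_i cn ((xi + zeta) i 0) = a ^+ 2 + b ^+ 2 + \sum_i 2 * pr (xi i 0) (zeta i 0).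
  by rewrite -Ha -Hb -!big_split; apply: eq_bigr => i _; rewrite mxE cnD.
apply: (@le_trans _ _ (a ^+ 2 + b ^+ 2 + \sum_i (t * cn (xi i 0) + t^-1 * cn (zeta i 0)))).
  by rewrite lerD2l; apply: ler_sum => i _; apply: pr_le.
rewrite big_split /= -!mulr_sumr.
rewrite Ha Hb /t invf_div.
have -> : b / a * a ^+ 2 = a * b by rewrite expr2 mulrA divfK ?gt_eqF // mulrC.
have -> : a / b * b ^+ 2 = a * b by rewrite expr2 mulrA divfK ?gt_eqF.
rewrite sqrrD; lra.
Qed.

Lemma vnormB n (xi zeta : 'cV[CC]_n) : vnorm (xi - zeta) <= vnorm xi + vnorm zeta.
Proof. by rewrite -(vnormN zeta) vnormD. Qed.

Lemma sumcn n (xi : 'cV[CC]_n) :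
  ((\sum_i cn (xi i 0))%:C)%C = ((map_mx Num.conj xi^T) *m xi) 0 0.
Proof.
rewrite mxE rmorph_sum /=; apply: eq_bigr => i _; rewrite !mxE.
by case: (xi i 0) => a b; rewrite /cn /=; simpc; congr (_ +i* _)%C; ring.
Qed.

Lemma vnorm_unitary n (U : 'M[CC]_n) (xi : 'cV[CC]_n) :
  (map_mx Num.conj U^T) *m U = 1%:M -> vnorm (U *m xi) = vnorm xi.
Proof.
move=> HU; rewrite !vnormE; congr Num.sqrt; apply: complexI.
rewrite !sumcn trmx_mul map_mxM -mulmxA (mulmxA (map_mx _ U^T)) HU mul1mx //.
Qed.

Lemma vnorm_sum n k (F : 'I_k -> 'cV[CC]_n) :
  vnorm (\sum_j F j) <= \sum_j vnorm (F j).
Proof.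
elim/big_rec2: _ => [|j y1 y2 _ IH]; first by rewrite vnorm0.
by apply: le_trans (vnormD _ _) _; rewrite lerD2l.
Qed.

Definition opset n (X : 'M[CC]_n) :=
  fun r : RR => exists xi : 'cV[CC]_n, vnorm xi = 1 /\ r = vnorm (X *m xi).

Lemma opnormE n (X : 'M[CC]_n) : opnorm X = sup (opset X).
Proof. by []. Qed.

Lemma cn_le_sum n (xi : 'cV[CC]_n) j : cn (xi j 0) <= \sum_i cn (xi i 0).
Proof.
rewrite (bigD1 j) //= lerDl sumr_ge0 // => i _; exact: cn_ge0.
Qed.

Lemma opset_ub n (X : 'M[CC]_n) : has_ubound (opset X).
Proof.
exists (\sum_j vnorm (col j X)) => r [xi [H1 ->]].
have -> : X *m xi = \sum_j (xi j 0) *: col j X.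
  apply/matrixP => i k; rewrite (ord1 k) !mxE summxE; apply: eq_bigr => j _.
  by rewrite !mxE mulrC.
apply: le_trans (vnorm_sum _) _; apply: ler_sum => j _.
rewrite vnormZ; apply: ler_piMl; first exact: vnorm_ge0.
rewrite -sqrtr1 ler_sqrt // -(expr1n _ 2) -H1 vnormE sqr_sqrtr; last first.
  by apply: sumr_ge0 => i _; exact: cn_ge0.
exact: cn_le_sum.
Qed.

Lemma opnorm_le n (X : 'M[CC]_n) (xi : 'cV[CC]_n) :
  vnorm (X *m xi) <= opnorm X * vnorm xi.
Proof.
have [->|nz] := eqVneq xi 0; first by rewrite mulmx0 vnorm0 mulr0.
have vp : 0 < vnorm xi.
  by rewrite lt0r vnorm_ge0 andbT; apply/eqP => /vnorm_eq0 /eqP; rewrite (negPf nz).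
set c := ((vnorm xi)^-1%:C)%C.
have H1 : vnorm (c *: xi) = 1.
  by rewrite vnormZr ger0_norm ?invr_ge0 ?(ltW vp) // mulVf ?gt_eqF.
have Hs : opset X (vnorm (X *m (c *: xi))) by exists (c *: xi).
have := sup_upper_bound (conj (ex_intro _ _ Hs) (opset_ub X)) Hs.
rewrite -scalemxAr vnormZr ger0_norm ?invr_ge0 ?(ltW vp) // => H.
rewrite opnormE -ler_pdivrMr // mulrC; exact: H.
Qed.

Lemma unit_exists n : (0 < n)%N -> exists xi : 'cV[CC]_n, vnorm xi = 1.
Proof.
move=> n0; exists (delta_mx (Ordinal n0) 0); rewrite vnormE (bigD1 (Ordinal n0)) //=.
rewrite big1 ?addr0; last by move=> i /negPf Hi; rewrite mxE Hi /cn /=; ring.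
by rewrite mxE !eqxx /cn /= expr0n /= addr0 expr1n sqrtr1.
Qed.

Lemma opnorm_ub n (X : 'M[CC]_n) (c : RR) : (0 < n)%N ->
  (forall xi, vnorm xi = 1 -> vnorm (X *m xi) <= c) -> opnorm X <= c.
Proof.
move=> n0 H; apply: ge_sup.
  by have [xi Hxi] := unit_exists n0; exists (vnorm (X *m xi)); exists xi.
by move=> r [xi [H1 ->]]; exact: H.
Qed.

Notation ct X := (map_mx Num.conj (trmx X)).

Lemma adjE n (X : 'M[CC]_n) : adj X = ct X.
Proof. by apply/matrixP => i j; rewrite !mxE. Qed.

Lemma ctK n (X : 'M[CC]_n) : ct (ct X) = X.
Proof. by apply/matrixP => i j; rewrite !mxE conjCK. Qed.

Lemma dist_tri n (u v w : 'cV[CC]_n) : vnorm (u - w) <= vnorm (u - v) + vnorm (v - w).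
Proof. by have := vnormD (u - v) (v - w); rewrite addrA subrK. Qed.

Lemma dist_sym n (u v : 'cV[CC]_n) : vnorm (u - v) = vnorm (v - u).
Proof. by rewrite -opprB vnormN. Qed.

Definition half : CC := ((2 : RR)^-1)%:C%C.

Lemma half_half : half + half = 1.
Proof.
rewrite /half; apply/eqP; rewrite eq_complex /= addr0 eqxx andbT.
by apply/eqP; field.
Qed.

Lemma conj_half : Num.conj half = half.
Proof. by rewrite /half /=; congr (_ +i* _)%C; rewrite oppr0. Qed.

Lemma vnorm_half n (x : 'cV[CC]_n) : vnorm (half *: x) = 2^-1 * vnorm x.
Proof. by rewrite vnormZr ger0_norm // invr_ge0. Qed.

Definition herm n (A : 'M[CC]_n) := half *: (A + ct A).

Lemma herm_ct n (A : 'M[CC]_n) : ct (herm A) = herm A.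
Proof.
apply/matrixP => i j; rewrite !mxE /half.
case: (A i j) => a b; case: (A j i) => c d /=.
apply/eqP; rewrite eq_complex /=; apply/andP; split; apply/eqP; ring.
Qed.

Lemma herm_diff n (A : 'M[CC]_n) (x : 'cV[CC]_n) :
  herm A *m x - A *m x = half *: ((ct A - A) *m x).
Proof.
rewrite /herm -scalemxAl mulmxDl mulmxBl.
set a := A *m x; set b := ct A *m x.
rewrite scalerDr scalerBr.
rewrite -[X in _ - X = _](scale1r a) -half_half scalerDl.
by rewrite opprD addrA [half *: a + _]addrC addrK.
Qed.

Lemma step_HA n (A : 'M[CC]_n) e (x : 'cV[CC]_n) :
  (forall x, vnorm ((ct A - A) *m x) <= e * vnorm x) ->
  vnorm (herm A *m x - A *m x) <= e / 2 * vnorm x.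
Proof.
move=> H; rewrite herm_diff vnorm_half mulrAC mulrC ler_pM2r ?invr_gt0 //.
Qed.

Lemma step_sq n (A F : 'M[CC]_n) e (x : 'cV[CC]_n) :
  (forall x, vnorm ((A *m A - F) *m x) <= e * vnorm x) ->
  (forall x, vnorm ((F *m 1%:M - 1%:M) *m x) <= e * vnorm x) ->
  vnorm (A *m (A *m x) - x) <= 2 * e * vnorm x.
Proof.
move=> H1 H2.
have -> : A *m (A *m x) - x = (A *m A - F) *m x + (F *m 1%:M - 1%:M) *m x.
  by rewrite !mulmxBl mulmx1 mul1mx mulmxA addrA subrK.
apply: le_trans (vnormD _ _) _.
apply: le_trans (lerD (H1 x) (H2 x)) _; rewrite -mulrDl.
by apply: ler_wpM2r; [exact: vnorm_ge0 | rewrite mulr2n mulrDl mul1r].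
Qed.

Lemma step_anti n (A B C D : 'M[CC]_n) e (x : 'cV[CC]_n) :
  (forall x, vnorm ((A *m B - C) *m x) <= e * vnorm x) ->
  (forall x, vnorm ((B *m A - D) *m x) <= e * vnorm x) ->
  (forall x, vnorm (((-1) *: C + 0 *: C - D) *m x) <= e * vnorm x) ->
  vnorm (A *m (B *m x) + B *m (A *m x)) <= 3 * e * vnorm x.
Proof.
move=> H1 H2 H3.
have -> : A *m (B *m x) + B *m (A *m x) =
   (A *m B - C) *m x + (B *m A - D) *m x - ((-1) *: C + 0 *: C - D) *m x.
  rewrite !mulmxBl !mulmxDl -!scalemxAl scale0r addr0 scaleN1r !mulmxA.
  rewrite opprB opprK. 
  set u := A *m B *m x; set v := B *m A *m x; set c := C *m x; set d := D *m x.
  rewrite (addrACA u (-c) v (-d)) -addrA (addrC d c) -opprD.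
  by rewrite -addrA subrK.
apply: le_trans (vnormB _ _) _.
apply: le_trans (lerD (vnormD _ _) (H3 x)) _.
apply: le_trans (lerD (lerD (H1 x) (H2 x)) (lexx _)) _; rewrite -!mulrDl.
have h3 : (3 : RR) * e = e + e + e by lra.
by rewrite h3.
Qed.


Lemma spec_decomp n (H : 'M[CC]_n) : ct H = H ->
  exists (P : 'M[CC]_n) (d : 'rV[CC]_n),
    [/\ P *m ct P = 1%:M, ct P *m P = 1%:M & H = ct P *m diag_mx d *m P].
Proof.
move=> Hh.
have Hn : H \is normalmx by apply/normalmxP; rewrite Hh.
have /unitarymxP PU := spectral_unitarymx H.
have PU' : ct (spectralmx H) *m spectralmx H = 1%:M.
  have := spectral_unitarymx H; rewrite -trmxC_unitary => /unitarymxP.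
  by rewrite ctK.
exists (spectralmx H), (spectral_diag H); split => //.
by rewrite -invmx_unitary ?spectral_unitarymx //; apply/orthomx_spectralP.
Qed.

Lemma delta_vnorm n (i : 'I_n) : vnorm (delta_mx i 0 : 'cV[CC]_n) = 1.
Proof.
rewrite vnormE (bigD1 i) //=.
rewrite big1 ?addr0; last by move=> j /negPf Hj; rewrite mxE Hj /cn /=; ring.
by rewrite mxE !eqxx /cn /= expr0n /= addr0 expr1n sqrtr1.
Qed.

Definition sgc (s : bool) : CC := ((if s then 1 else -1 : RR)%:C)%C.

Lemma sign_bound (z : CC) (s : bool) : (0 <= complex.Re z) = s ->
  Num.sqrt (cn (z - sgc s)) <= Num.sqrt (cn (z ^+ 2 - 1)).
Proof.
move=> Hs.
have E : z ^+ 2 - 1 = (z - sgc s) * (z + sgc s).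
  case: s {Hs}; rewrite /sgc; case: z => a b; apply/eqP; rewrite eq_complex /=;
  apply/andP; split; apply/eqP; ring.
have G : 1 <= cn (z + sgc s).
  apply: le_trans (cnD_Re _).
  clear E; case: s Hs; rewrite /sgc; case: z => a b /= Ha.
    have : 0 <= a by rewrite Ha.
    move=> h; nra.
  have : a < 0 by rewrite ltNge Ha.
  move=> h; nra.
rewrite ler_sqrt ?cn_ge0 // E cnM ler_peMr // cn_ge0 //.
Qed.

Lemma diag_delta n (d : 'rV[CC]_n) (i : 'I_n) :
  diag_mx d *m delta_mx i 0 = d 0 i *: (delta_mx i 0 : 'cV[CC]_n).
Proof.
apply/matrixP => j k; rewrite mul_diag_mx !mxE.
by case: (eqVneq j i) => [->|]; rewrite ?mulr1 ?mulr0 //= ?andbT ?mulr0.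
Qed.

Lemma eig_bound n (A F P : 'M[CC]_n) (d : 'rV[CC]_n) e i :
  0 <= e -> e <= 1 ->
  (forall x, vnorm (A *m x) <= vnorm x) ->
  (forall x, vnorm ((ct A - A) *m x) <= e * vnorm x) ->
  (forall x, vnorm ((A *m A - F) *m x) <= e * vnorm x) ->
  (forall x, vnorm ((F *m 1%:M - 1%:M) *m x) <= e * vnorm x) ->
  P *m ct P = 1%:M -> herm A = ct P *m diag_mx d *m P ->
  Num.sqrt (cn (d 0 i ^+ 2 - 1)) <= 4 * e.
Proof.
move=> e0 e1 HA Hct HAA HF PP HH.
pose x := ct P *m (delta_mx i 0 : 'cV[CC]_n).
have Nx : vnorm x = 1.
  by rewrite /x vnorm_unitary ?ctK // delta_vnorm.
have Hx : herm A *m x = d 0 i *: x.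
  rewrite HH /x -!mulmxA (mulmxA P) PP mul1mx diag_delta scalemxAr //.
have E : herm A *m (herm A *m x) - x = (d 0 i ^+ 2 - 1) *: x.
  by rewrite Hx -scalemxAr Hx scalerA scalerBl scale1r expr2.
have := vnormZ (d 0 i ^+ 2 - 1) x; rewrite -E Nx mulr1 => <-.
set h := herm A.
have T1 := step_HA (h *m x) Hct.
have T2 := step_HA x Hct.
have T3 := step_sq x HAA HF.
have T4 := HA (h *m x - A *m x).
rewrite Nx mulr1 in T2. rewrite Nx mulr1 in T3.
have T5 : vnorm (h *m x) <= 1 + e / 2.
  have := dist_tri (h *m x) (A *m x) 0; rewrite !subr0 => T.
  apply: le_trans T _; rewrite addrC lerD // -Nx; exact: HA.
have T6 := dist_tri (h *m (h *m x)) (A *m (h *m x)) x.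
have T7 := dist_tri (A *m (h *m x)) (A *m (A *m x)) x.
rewrite -mulmxBr in T7.
have T8 : e / 2 * vnorm (h *m x) <= e / 2 * (1 + e / 2) by rewrite ler_wpM2l // divr_ge0.
have ee : e * e <= e by rewrite ler_piMr.
have T9 : e / 2 * (1 + e / 2) <= e / 2 + e / 4 by clear -ee e0; lra.
rewrite -/h in T1 T2.
set a1 := vnorm (h *m (h *m x) - x) in T6 *.
set a2 := vnorm (h *m (h *m x) - A *m (h *m x)) in T1 T6.
set a3 := vnorm (A *m (h *m x) - x) in T6 T7.
set a4 := vnorm (A *m (h *m x - A *m x)) in T4 T7.
set a5 := vnorm (h *m x - A *m x) in T2 T4.
set a6 := vnorm (A *m (A *m x) - x) in T3 T7.
set a7 := e / 2 * vnorm (h *m x) in T1 T8.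
set a8 := e / 2 * (1 + e / 2) in T8 T9.
clear -T1 T2 T3 T4 T6 T7 T8 T9 e0.
lra.
Qed.

Lemma supp_bound n (A F P : 'M[CC]_n) (d : 'rV[CC]_n) e (s : bool) (x : 'cV[CC]_n) :
  0 <= e -> e <= 1 ->
  (forall x, vnorm (A *m x) <= vnorm x) ->
  (forall x, vnorm ((ct A - A) *m x) <= e * vnorm x) ->
  (forall x, vnorm ((A *m A - F) *m x) <= e * vnorm x) ->
  (forall x, vnorm ((F *m 1%:M - 1%:M) *m x) <= e * vnorm x) ->
  P *m ct P = 1%:M -> ct P *m P = 1%:M -> herm A = ct P *m diag_mx d *m P ->
  (forall i, (0 <= complex.Re (d 0 i)) != s -> (P *m x) i 0 = 0) ->
  vnorm (herm A *m x - sgc s *: x) <= 4 * e * vnorm x.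
Proof.
move=> e0 e1 HA Hct HAA HF PP PP' HH Hsupp.
set eta := P *m x.
pose w : 'cV[CC]_n := \col_k ((d 0 k - sgc s) * eta k 0).
have Ew : herm A *m x - sgc s *: x = ct P *m w.
  have -> : sgc s *: x = ct P *m (sgc s *: eta).
    by rewrite /eta -scalemxAr mulmxA PP' mul1mx.
  rewrite HH -!mulmxA -mulmxBr; congr (_ *m _).
  by apply/matrixP => k j; rewrite (ord1 j) mul_diag_mx !mxE mulrBl.
rewrite Ew vnorm_unitary ?ctK //.
have Nx : vnorm x = vnorm eta by rewrite /eta vnorm_unitary.
have e4 : 0 <= 4 * e by rewrite mulr_ge0.
have E4 : 4 * e = Num.sqrt ((4 * e) ^+ 2) by rewrite sqrtr_sqr ger0_norm.
rewrite Nx !vnormE {1}E4 -sqrtrM ?sqr_ge0 //.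
rewrite ler_sqrt; last by rewrite mulr_ge0 ?sqr_ge0 // sumr_ge0 // => k _; exact: cn_ge0.
rewrite mulr_sumr; apply: ler_sum => k _; rewrite mxE cnM.
have [Hk|Hk] := eqVneq (0 <= complex.Re (d 0 k)) s; last first.
  by rewrite Hsupp // /cn /= expr0n /= !addr0 !mulr0.
apply: ler_wpM2r; first exact: cn_ge0.
have := le_trans (sign_bound Hk) (eig_bound k e0 e1 HA Hct HAA HF PP HH).
move=> H; rewrite -(sqr_sqrtr (cn_ge0 (d 0 k - sgc s))).
by rewrite lerXn2r ?nnegrE ?sqrtr_ge0.
Qed.

Lemma sel_entry n (J : {set 'I_n}) (v : 'cV[CC]_n) (j : 'I_#|J|) :
  ((\matrix_(j0 < #|J|, k < n) ((k == enum_val j0)%:R : CC)) *m v) j 0 = v (enum_val j) 0.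
Proof.
rewrite mxE (bigD1 (enum_val j)) //= big1 ?addr0; first by rewrite mxE eqxx mul1r.
by move=> k /negPf Hk; rewrite mxE Hk mul0r.
Qed.

Lemma kernel_exists n (J : {set 'I_n}) (M : 'M[CC]_n) : (#|J| + #|J| < n)%N ->
  exists eta : 'cV[CC]_n, [/\ eta != 0, forall i, i \in J -> eta i 0 = 0
                           & forall i, i \in J -> (M *m eta) i 0 = 0].
Proof.
move=> HJ.
pose S := \matrix_(j0 < #|J|, k < n) ((k == enum_val j0)%:R : CC).
pose N := col_mx S (S *m M).
pose K := kermx N^T.
have rK : (0 < \rank K)%N.
  rewrite mxrank_ker mxrank_tr subn_gt0; apply: leq_ltn_trans HJ.
  exact: rank_leq_row.
have [r Hr] : exists r, row r K != 0.
  apply/existsP; rewrite -negb_forall; apply/negP => /forallP H0.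
  move: rK; rewrite lt0n mxrank_eq0 => /negP; apply; apply/eqP/row_matrixP => r.
  by rewrite row0; apply/eqP; exact: H0.
exists (row r K)^T; split.
- by apply: contra Hr => /eqP H; rewrite -(trmxK (row r K)) H trmx0.
- have E : N *m (row r K)^T = 0.
    by rewrite -(trmxK N) -trmx_mul -row_mul mulmx_ker row0 trmx0.
  move=> i Hi; have := E; rewrite mul_col_mx => /eqP; rewrite col_mx_eq0 => /andP[/eqP E1 _].
  move/matrixP/(_ (enum_rank_in Hi i) 0): E1.
  by rewrite /S sel_entry (enum_rankK_in Hi Hi) [in X in _ = X -> _]mxE.
- have E : N *m (row r K)^T = 0.
    by rewrite -(trmxK N) -trmx_mul -row_mul mulmx_ker row0 trmx0.
  move=> i Hi; have := E; rewrite mul_col_mx => /eqP; rewrite col_mx_eq0 => /andP[_ /eqP E2].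
  move/matrixP/(_ (enum_rank_in Hi i) 0): E2.
  by rewrite -mulmxA /S sel_entry (enum_rankK_in Hi Hi) [in X in _ = X -> _]mxE.
Qed.

Lemma choose_side n (f : 'I_n -> bool) : odd n ->
  exists c, (#|[set i | f i != c]| + #|[set i | f i != c]| < n)%N.
Proof.
move=> On.
have Hs : ~: [set i | f i != true] = [set i | f i != false].
  by apply/setP => i; rewrite !inE; case: (f i).
have E : (#|[set i | f i != true]| + #|[set i | f i != false]| = n)%N.
  by rewrite -Hs cardsC card_ord.
set a := #|[set i | f i != true]| in E *; set b := #|[set i | f i != false]| in E *.
case: (ltngtP a b) => H.
- by exists true; rewrite -/a -E ltn_add2l.
- by exists false; rewrite -/b -E ltn_add2r.
- by exfalso; move: On; rewrite -E H addnn odd_double.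
Qed.

Lemma core n (A B F C D : 'M[CC]_n) (e : RR) : odd n -> 0 <= e -> e < 1 / 100 ->
  (forall x, vnorm (A *m x) <= vnorm x) ->
  (forall x, vnorm (B *m x) <= vnorm x) ->
  (forall x, vnorm ((ct A - A) *m x) <= e * vnorm x) ->
  (forall x, vnorm ((A *m A - F) *m x) <= e * vnorm x) ->
  (forall x, vnorm ((F *m 1%:M - 1%:M) *m x) <= e * vnorm x) ->
  (forall x, vnorm ((B *m B - F) *m x) <= e * vnorm x) ->
  (forall x, vnorm ((A *m B - C) *m x) <= e * vnorm x) ->
  (forall x, vnorm ((B *m A - D) *m x) <= e * vnorm x) ->
  (forall x, vnorm (((-1) *: C + 0 *: C - D) *m x) <= e * vnorm x) -> False.
Proof.
move=> On e0 e01 HA HB Hct HAA HF HBB HAB HBA HCD.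
have e1 : e <= 1 by lra.
have [P [d [PP PP' HH]]] := spec_decomp (herm_ct A).
have [c Hc] := choose_side (fun i => 0 <= complex.Re (d 0 i)) On.
have [eta [nz H1 H2]] := kernel_exists (P *m B *m ct P) Hc.
pose xi := ct P *m eta.
have Pxi : P *m xi = eta by rewrite /xi mulmxA PP mul1mx.
pose y := B *m xi.
have Py : P *m y = (P *m B *m ct P) *m eta by rewrite /y /xi !mulmxA.
have S1 : vnorm (herm A *m xi - sgc c *: xi) <= 4 * e * vnorm xi.
  apply: (@supp_bound n A F P d e c xi e0 e1 HA Hct HAA HF PP PP' HH) => i Hi.
  by rewrite Pxi; apply: H1; rewrite inE.
have S2 : vnorm (herm A *m y - sgc c *: y) <= 4 * e * vnorm y.
  apply: (@supp_bound n A F P d e c y e0 e1 HA Hct HAA HF PP PP' HH) => i Hi.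
  by rewrite Py; apply: H2; rewrite inE.
have Nxi : 0 < vnorm xi.
  rewrite /xi vnorm_unitary ?ctK // lt0r vnorm_ge0 andbT.
  by apply/eqP => /vnorm_eq0 /eqP; rewrite (negPf nz).
have Ny1 : vnorm y <= vnorm xi by exact: HB.
have Ny2 : vnorm xi <= vnorm y + 2 * e * vnorm xi.
  have T := dist_tri xi (B *m (B *m xi)) 0; rewrite !subr0 in T.
  rewrite (dist_sym xi) in T.
  apply: le_trans T _; rewrite [X in _ <= X]addrC; apply: lerD.
    exact: (step_sq xi HBB HF).
  exact: HB.
have Ey : y = B *m xi by [].
clearbody y xi.
have D1 := S2; rewrite (dist_sym (herm A *m y)) in D1.
have D2 := step_HA y Hct.
have D3 : vnorm (A *m y - - (B *m (A *m xi))) <= 3 * e * vnorm xi.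
  by rewrite opprK Ey; exact: (step_anti xi HAB HBA HCD).
have D4 : vnorm (- (B *m (A *m xi)) - - (B *m (herm A *m xi))) <= e / 2 * vnorm xi.
  rewrite opprK addrC -mulmxBr; apply: le_trans (HB _) _; exact: (step_HA xi Hct).
have D5 : vnorm (- (B *m (herm A *m xi)) - - (sgc c *: y)) <= 4 * e * vnorm xi.
  rewrite opprK addrC Ey scalemxAr -mulmxBr; apply: le_trans (HB _) _.
  by rewrite (dist_sym (sgc c *: xi)).
have T1 := dist_tri (sgc c *: y) (herm A *m y) (- (sgc c *: y)).
have T2 := dist_tri (herm A *m y) (A *m y) (- (sgc c *: y)).
have T3 := dist_tri (A *m y) (- (B *m (A *m xi))) (- (sgc c *: y)).
have T4 := dist_tri (- (B *m (A *m xi))) (- (B *m (herm A *m xi))) (- (sgc c *: y)).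
have E2 : vnorm (sgc c *: y - - (sgc c *: y)) = 2 * vnorm y.
  rewrite opprK -scalerDl vnormZ; congr (_ * _).
  have -> : cn (sgc c + sgc c) = 2 ^+ 2 by rewrite /sgc; case: (c); rewrite /cn /=; ring.
  by rewrite sqrtr_sqr ger0_norm.
have Q1 : e * vnorm y <= e * vnorm xi by rewrite ler_wpM2l.
have Q2 : e * vnorm xi < 1 / 100 * vnorm xi by rewrite ltr_pM2r.
rewrite E2 in T1.
set a1 := vnorm (sgc c *: y - herm A *m y) in T1 D1.
set a2 := vnorm (herm A *m y - - (sgc c *: y)) in T1 T2.
set a3 := vnorm (herm A *m y - A *m y) in T2 D2.
set a4 := vnorm (A *m y - - (sgc c *: y)) in T2 T3.
set a5 := vnorm (A *m y - - (B *m (A *m xi))) in T3 D3.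
set a6 := vnorm (- (B *m (A *m xi)) - - (sgc c *: y)) in T3 T4.
set a7 := vnorm (- (B *m (A *m xi)) - - (B *m (herm A *m xi))) in T4 D4.
set a8 := vnorm (- (B *m (herm A *m xi)) - - (sgc c *: y)) in T4 D5.
set ny := vnorm y in T1 D1 D2 Q1 Ny1 Ny2.
set nx := vnorm xi in D3 D4 D5 Q1 Q2 Ny1 Ny2 Nxi.
rewrite mulrAC in D2. rewrite mulrAC in D4.
rewrite -!mulrA in D1 D3 D5 Ny2.
set p := e * nx in D3 D4 D5 Q1 Q2 Ny2.
set q := e * ny in D1 D2 Q1.
clear -T1 T2 T3 T4 D1 D2 D3 D4 D5 Q1 Q2 Ny1 Ny2 Nxi.
lra.
Qed.

Definition uu k : 'M[CC]_(k + k) := block_mx 1%:M 0 0 (- 1%:M).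
Definition vv k : 'M[CC]_(k + k) := block_mx 0 1%:M 1%:M 0.

Lemma ct_block k (a b c d : 'M[CC]_k) :
  ct (block_mx a b c d) = block_mx (ct a) (ct c) (ct b) (ct d).
Proof. by rewrite tr_block_mx map_block_mx. Qed.

Lemma ct1 n : ct (1%:M : 'M[CC]_n) = 1%:M.
Proof. by rewrite trmx1 map_mx1. Qed.

Lemma ct0 n : ct (0 : 'M[CC]_n) = 0.
Proof. by rewrite trmx0 map_mx0. Qed.

Lemma ctN n (X : 'M[CC]_n) : ct (- X) = - ct X.
Proof. by rewrite linearN map_mxN. Qed.

Lemma ctM n (X Y : 'M[CC]_n) : ct (X *m Y) = ct Y *m ct X.
Proof. by rewrite trmx_mul map_mxM. Qed.

Lemma ct_uu k : ct (uu k) = uu k.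
Proof. by rewrite /uu ct_block ctN ct1 ct0. Qed.

Lemma ct_vv k : ct (vv k) = vv k.
Proof. by rewrite /vv ct_block ct1 ct0. Qed.

Lemma uu2 k : uu k *m uu k = 1%:M.
Proof.
rewrite /uu mulmx_block !mulmx0 !mul0mx !mulmx1 !addr0 !add0r mulmxN mulNmx opprK mulmx1.
by rewrite scalar_mx_block.
Qed.

Lemma vv2 k : vv k *m vv k = 1%:M.
Proof.
rewrite /vv mulmx_block !mulmx0 !mul0mx !mulmx1 !addr0 !add0r.
by rewrite scalar_mx_block.
Qed.

Lemma anti k : vv k *m uu k = - (uu k *m vv k).
Proof.
rewrite /uu /vv !mulmx_block !mulmx0 !mul0mx !mulmx1 !mul1mx !addr0 !add0r.
by rewrite opp_block_mx oppr0 opprK.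
Qed.

Lemma size_play l m (s : cstrat l m) t n : size (play s t n) = n.
Proof. by elim: n => //= n IH; rewrite size_rcons IH. Qed.

Lemma nth_play l m (s : cstrat l m) t n j : (j < n)%N ->
  nth (0, 0) (play s t n) j = inning s t (play s t j).
Proof.
elim: n => // n IH; rewrite ltnS leq_eqVlt => /orP[/eqP ->|Hj] /=.
  by rewrite nth_rcons size_play ltnn eqxx.
by rewrite nth_rcons size_play Hj IH.
Qed.

Definition strat l k : cstrat l (k + k) := fun h =>
  match size h with
  | 0 => inl 1%:M
  | 1 => inr 1%:M
  | 2 => inr (uu k)
  | 3 => inr (vv k)
  | 4 => inr (uu k *m vv k)
  | 5 => inr (vv k *m uu k)
  | _ => inr 1%:M
  end.
Arguments strat : clear implicits.

Lemma op_unit n (X : 'M[CC]_n) : (0 < n)%N -> ct X *m X = 1%:M -> opnorm X <= 1.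
Proof.
move=> n0 HX; apply: opnorm_ub => // xi H1.
by rewrite vnorm_unitary ?ctK // H1.
Qed.

Lemma op_le1 n (X : 'M[CC]_n) x : opnorm X <= 1 -> vnorm (X *m x) <= vnorm x.
Proof.
move=> H; apply: le_trans (opnorm_le X x) _.
by rewrite -{2}(mul1r (vnorm x)) ler_wpM2r // vnorm_ge0.
Qed.

Lemma cond0 n n' (X : 'M[CC]_n) (Y : 'M[CC]_n') eps : (0 < n')%N -> Y = 0 ->
  `|opnorm X - opnorm Y| <= eps -> forall x, vnorm (X *m x) <= eps * vnorm x.
Proof.
move=> n0 -> H x.
have H0 : opnorm (0 : 'M[CC]_n') <= 0.
  by apply: opnorm_ub => // xi _; rewrite mul0mx vnorm0.
have H1 : opnorm X <= eps.
  have := ler_norm (opnorm X - opnorm (0 : 'M[CC]_n')) => H2.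
  lra.
apply: le_trans (opnorm_le X x) _.
by rewrite ler_wpM2r // vnorm_ge0.
Qed.

Lemma strat_legal l k : (0 < l)%N -> (0 < k)%N -> cstrat_legal (strat l k).
Proof.
move=> l0 k0 h; have kk : (0 < k + k)%N by rewrite addn_gt0 k0.
rewrite /strat; case: (size h) => [|[|[|[|[|[|n]]]]]] /=;
  apply: op_unit => //; rewrite ?ct1 ?mul1mx //.
- by rewrite ct_uu uu2.
- by rewrite ct_vv vv2.
- by rewrite ctM ct_uu ct_vv mulmxA -(mulmxA (vv k)) uu2 mulmx1 vv2.
- by rewrite ctM ct_uu ct_vv mulmxA -(mulmxA (uu k)) vv2 mulmx1 uu2.
Qed.

Lemma main_k eps l k : 0 <= eps -> eps < 1 / 100 -> (0 < k)%N -> odd l ->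
  challenger_wins l (k + k) 6 eps.
Proof.
move=> e0 e1 k0 lo.
have l0 : (0 < l)%N by case: l lo.
have kk : (0 < k + k)%N by rewrite addn_gt0 k0.
exists (strat l k); split; first exact: strat_legal.
move=> t [tL tR] Hdw.
set s := strat l k in Hdw.
have Ej : forall j, (j < 6)%N -> nth (0, 0) (play s t 6) j = inning s t (play s t j).
  by move=> j; exact: nth_play.
have E0 : nth (0, 0) (play s t 6) 0 = (1%:M, dreplyL t (play s t 0) 1%:M).
  by rewrite Ej.
have E1 : nth (0, 0) (play s t 6) 1 = (dreplyR t (play s t 1) 1%:M, 1%:M).
  by rewrite Ej // /inning /s /strat size_play.
have E2 : nth (0, 0) (play s t 6) 2 = (dreplyR t (play s t 2) (uu k), uu k).
  by rewrite Ej // /inning /s /strat size_play.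
have E3 : nth (0, 0) (play s t 6) 3 = (dreplyR t (play s t 3) (vv k), vv k).
  by rewrite Ej // /inning /s /strat size_play.
have E4 : nth (0, 0) (play s t 6) 4 =
  (dreplyR t (play s t 4) (uu k *m vv k), uu k *m vv k).
  by rewrite Ej // /inning /s /strat size_play.
have E5 : nth (0, 0) (play s t 6) 5 =
  (dreplyR t (play s t 5) (vv k *m uu k), vv k *m uu k).
  by rewrite Ej // /inning /s /strat size_play.
set F := dreplyR t (play s t 1) 1%:M in E1.
set A := dreplyR t (play s t 2) (uu k) in E2.
set B := dreplyR t (play s t 3) (vv k) in E3.
set C := dreplyR t (play s t 4) (uu k *m vv k) in E4.
set D := dreplyR t (play s t 5) (vv k *m uu k) in E5.
have n0 : `|0 : CC| <= 1 by rewrite normr0 ler01.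
have n1 : `|-1 : CC| <= 1 by rewrite normrN1.
have uL : opnorm (uu k) <= 1 by apply: op_unit => //; rewrite ct_uu uu2.
have vL : opnorm (vv k) <= 1 by apply: op_unit => //; rewrite ct_vv vv2.
have HA : forall x, vnorm (A *m x) <= vnorm x by move=> x; apply: op_le1; exact: tR.
have HB : forall x, vnorm (B *m x) <= vnorm x by move=> x; apply: op_le1; exact: tR.
have [_ K1 _ _] := Hdw 1 0 0 isT isT isT 0 0 n0 n0.
have [_ K2 _ K3] := Hdw 2 2 1 isT isT isT 0 0 n0 n0.
have [_ K4 _ _] := Hdw 3 3 1 isT isT isT 0 0 n0 n0.
have [_ K5 _ _] := Hdw 2 3 4 isT isT isT 0 0 n0 n0.
have [_ K6 _ _] := Hdw 3 2 5 isT isT isT 0 0 n0 n0.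
have [_ _ K7 _] := Hdw 4 4 5 isT isT isT (-1) 0 n1 n0.
cbv beta in K1; cbv beta in K2; cbv beta in K3; cbv beta in K4; cbv beta in K5; cbv beta in K6; cbv beta in K7.
rewrite E0 E1 in K1; cbn [fst snd] in K1.
rewrite E1 E2 in K2; cbn [fst snd] in K2.
rewrite E2 in K3; cbn [fst snd] in K3.
rewrite E1 E3 in K4; cbn [fst snd] in K4.
rewrite E2 E3 E4 in K5; cbn [fst snd] in K5.
rewrite E2 E3 E5 in K6; cbn [fst snd] in K6.
rewrite E4 E5 in K7; cbn [fst snd] in K7.
apply: (@core l A B F C D eps lo e0 e1 HA HB).
- by rewrite !adjE in K3; apply: (cond0 kk _ K3); rewrite ct_uu subrr.
- by apply: (cond0 kk _ K2); rewrite uu2 subrr.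
- by apply: (cond0 kk _ K1); rewrite mul1mx subrr.
- by apply: (cond0 kk _ K4); rewrite vv2 subrr.
- by apply: (cond0 kk _ K5); rewrite subrr.
- by apply: (cond0 kk _ K6); rewrite subrr.
- apply: (cond0 kk _ K7).
  by rewrite scale0r addr0 scaleN1r anti subrr.
Qed.

Theorem theorem4 :
  exists eps0 : RR, 0 < eps0 /\
    forall eps : RR, 0 < eps -> eps < eps0 ->
    forall l m : nat, (1 <= l)%N -> odd l -> (2 <= m)%N -> ~~ odd m ->
      challenger_wins l m 6 eps.
Proof.
exists (1 / 100); split; first by rewrite divr_gt0.
move=> eps e0 e1 l m l1 lo m2 me.
have [k Hk] : exists k, m = (k + k)%N.
  exists m./2; rewrite addnn -[in LHS](odd_double_half m) (negPf me) add0n //.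
subst m.
have k0 : (0 < k)%N by move: m2; case: (k).
exact: main_k (ltW e0) e1 k0 lo.
Qed.
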